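(* Let $S=(0,1)$. Let $\{\lambda_n\}_{n\geq 1}$ be i.i.d. random variables, each uniformly distributed on $(3.87,4)$, and let $X_0$ be an $S$-valued random variable independent of the $\lambda_n$'s. Define the Markov process $X_{n+1}=\lambda_{n+1}X_n(1-X_n)$ for $n\geq 0$, with one-step transition probability $p(x,A)=\mathrm{Prob}(X_1\in A\mid X_0=x)=\mathrm{Prob}(\lambda_1 x(1-x)\in A)$. Let $\lambda_{\min}=3.87$, let $A_0=\left(1-\frac{1}{\lambda_{\min}},\,1-\frac14\right)$, and let $\phi$ be normalized Lebesgue measure on $A_0$, i.e. $\phi(A)=\frac{1}{|A_0|}\,\mathrm{Leb}(A\cap A_0)$ for measurable $A$, where $|A_0|$ is the length of $A_0$. Then there exists $c>0$ such that for all $x\in A_0$ and all measurable $A\subset(0,1)$, $p(x,A)\geq c\,\phi(A)$.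
   Context: $A_0$ is the set of fixed points $1-1/\lambda$ of the deterministic logistic maps $x\mapsto \lambda x(1-x)$ for $\lambda\in(3.87,4)$. *)

(* Defs.v *)
From HB Require Import structures.
From mathcomp Require Import all_boot all_order all_algebra.
From mathcomp Require Import all_classical all_reals all_analysis.
Set Implicit Arguments. Unset Strict Implicit. Unset Printing Implicit Defensive.
Import Order.TTheory GRing.Theory Num.Theory.
Import numFieldNormedType.Exports.
Local Open Scope classical_set_scope.
Local Open Scope ring_scope.

Section defs.
Variable R : realType.

Definition lmin : R := 387%:R / 100%:R.
Definition lmax : R := 4%:R.

Lemma lmin_lt_lmax : lmin < lmax.
Proof.
rewrite /lmin /lmax ltr_pdivrMr ?ltr0n // -natrM ltr_nat //.
Qed.

Definition A0 : set R := `](1 - lmin^-1), (1 - 4%:R^-1)[.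

Definition phi (A : set R) : \bar R :=
  (lebesgue_measure (A `&` A0) * ((1 - 4%:R^-1) - (1 - lmin^-1))^-1%:E)%E.

(** one-step transition probability p(x,A) = Prob(lambda_1 x(1-x) \in A),
    where lam : T -> R is the random variable lambda_1 on the probability
    space (T, P). *)
Definition trans_prob d (T : measurableType d) (P : probability T R)
  (lam : T -> R) (x : R) (A : set R) : \bar R :=
  P [set t | A (lam t * (x * (1 - x)))].

End defs.

(* Main.v *)
Require Import Defs.
From HB Require Import structures.
From mathcomp Require Import all_boot all_order all_algebra.
From mathcomp Require Import all_classical all_reals all_analysis.
Import Order.TTheory GRing.Theory Num.Theory.
Import numFieldNormedType.Exports.
Local Open Scope classical_set_scope.
Local Open Scope ring_scope.

From mathcomp Require Import ring lra.
Lemma leb_scale (R : realType) (y : R) (y0 : 0 < y) (A : set R) :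
  measurable A ->
  lebesgue_measure A = (y%:E * lebesgue_measure ((fun t : R => (t * y)%R) @^-1` A))%E.
Proof.
move=> mA.
have mf : measurable_fun [set: measurableTypeR R] ((fun t : R => t * y) : measurableTypeR R -> measurableTypeR R) by exact: measurable_realfun.mulrr_measurable.
rewrite (@lebesgue_measure_unique R (mscale (NngNum (ltW y0)) (measure_function_pushforward__canonical__measure_function_Measure (@lebesgue_measure R) mf))) //=.
move=> _ [[a b]] _ <-.
rewrite /mscale /=.
rewrite (_ : pushforward _ _ _ = lebesgue_measure (`]a / y, b / y] : set R)); last first.
  rewrite /pushforward; congr (lebesgue_measure _).
  apply/seteqP; split => t /=; rewrite !in_itv /= ?ler_pdivlMr ?ltr_pdivrMr ?ltr_pdivlMr ?ler_pdivrMr //.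
rewrite !lebesgue_measure_itv /= !lte_fin ltr_pM2r ?invr_gt0 //.
case: ifPn => ab; last by rewrite mule0.
by rewrite -!EFinD -EFinM -mulrBl mulrCA divff ?gt_eqF // mulr1.
Qed.
Lemma num (R : realType) (x t : R) : 287%:R/387%:R < x -> x < 3%:R/4%:R ->
  287%:R/387%:R < t*(x*(1-x)) -> t*(x*(1-x)) < 3%:R/4%:R -> 387%:R/100%:R <= t <= 4%:R.
Proof.
move=> h1 h2 h3 h4.
have y0 : 0 < x*(1-x) by nra.
have y1 : x*(1-x) <= 287%:R/387%:R * (100%:R/387%:R) by nra.
have y2 : 3%:R/16%:R < x*(1-x) by nra.
apply/andP; split.
  rewrite leNgt; apply/negP => ht.
  have : t * (x*(1-x)) < 387%:R/100%:R * (x*(1-x)) by rewrite ltr_pM2r.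
  nra.
rewrite leNgt; apply/negP => ht.
have : 4%:R * (x*(1-x)) < t * (x*(1-x)) by rewrite ltr_pM2r.
nra.
Qed.

Theorem mainTheorem2 (R : realType) (d : measure_display) (T : measurableType d)
  (P : probability T R) (lam : T -> R)
  (mlam : measurable_fun setT lam)
  (lam_unif : forall B : set R, measurable B ->
     P (lam @^-1` B) = uniform_prob (@lmin_lt_lmax R) B) :
  exists c : R, 0 < c /\
    forall x : R, A0 x ->
    forall A : set R, measurable A -> A `<=` `]0, 1[ ->
      (c%:E * phi A <= trans_prob P lam x A)%E.
Proof.
have lminE : (lmin R)^-1 = 100%:R / 387%:R by rewrite /lmin invf_div.
have uE : 1 - (lmin R)^-1 = 287%:R / 387%:R by rewrite lminE; field.
have lminE' : (lmin R) = 387%:R / 100%:R by [].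
set L : R := (1 - 4%:R^-1) - (1 - (lmin R)^-1).
have L0 : 0 < L by rewrite /L uE; lra.
exists L; split => // x Ax A mA _.
have [x1 x2] : 287%:R/387%:R < x /\ x < 3%:R/4%:R.
  by move: Ax; rewrite /A0 /= in_itv /= uE => /andP[-> h]; split => //; lra.
set y := x * (1 - x).
have y0 : 0 < y by rewrite /y; nra.
have y1 : y <= 1 by rewrite /y; nra.
set f := fun t : R => t * y.
set B := A `&` (@A0 R).
have mB : measurable B by apply: measurableI => //; exact: measurable_itv.
have mf : measurable_fun setT f by exact: measurable_realfun.mulrr_measurable.
have mfB : measurable (f @^-1` B) by rewrite -[X in measurable X]setTI; exact: mf.
have fB : forall t, (f @^-1` B) t -> lmin R <= t <= lmax R.
  move=> t [_]; rewrite /A0 /= in_itv /= uE => /andP[h1 h2].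
  rewrite lminE' /lmax; apply: (@num R x t x1 x2 h1).
  by move: h2; rewrite (_ : 1 - 4%:R^-1 = 3%:R/4%:R :> R) //; field.
have -> : (L%:E * phi A = lebesgue_measure B)%E.
  by rewrite /phi -/B -/L muleCA -EFinM mulfV ?gt_eqF // mule1.
rewrite (@leb_scale R y y0 B mB) -/f.
have m0 : (0 <= lebesgue_measure (f @^-1` B))%E by exact: measure_ge0.
apply: (@le_trans _ _ (lebesgue_measure (f @^-1` B))).
  by rewrite -[X in (_ <= X)%E]mul1e; apply: lee_pmul => //; rewrite lee_fin ltW.
apply: (@le_trans _ _ ((lmax R - lmin R)^-1%:E * lebesgue_measure (f @^-1` B))%E).
  rewrite -[X in (X <= _)%E]mul1e; apply: lee_pmul => //.
  have h : (4%:R - 387%:R/100%:R)^-1 = 100%:R/13%:R :> R by field.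
  by rewrite lee_fin /lmax lminE' h; lra.
have -> : (((lmax R - lmin R)^-1)%:E * lebesgue_measure (f @^-1` B))%E = P (lam @^-1` (f @^-1` B)).
  rewrite lam_unif // /uniform_prob -integral_cst //.
  apply: eq_integral => t; rewrite inE => /fB ht.
  by rewrite /uniform_pdf ht.
rewrite /trans_prob; apply: le_measure; rewrite ?inE.
- by rewrite -[X in measurable X]setTI; apply: mlam.
- rewrite (_ : [set t | A (lam t * (x * (1 - x)))] = lam @^-1` (f @^-1` A)) //.
  by rewrite -[X in measurable X]setTI; apply: mlam => //; rewrite -[X in measurable X]setTI; exact: mf.
- by move=> t [].
Qed.
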